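(* Let $\sigma\subseteq N_\mathbb{Q}$ be a strongly convex rational polyhedral cone, $\tau$ a $k$-dimensional regular face with primitive ray generators $p_1,\ldots,p_k$, $\{e_1^{(r)},e_2^{(r)}\}_{r=1}^k$ a set of Demazure roots of $\sigma$ compatible with $\tau$, and $\gamma$ a face of $\sigma$. Suppose that for each $r$ with $p_r\notin\gamma$ at least one of $e_1^{(r)},e_2^{(r)}$ lies in $\gamma^\perp$. Then for every $r$ with $p_r\notin\gamma$ there exists $u\in\gamma^\perp\cap\sigma^\vee$ such that $\langle p_r,u\rangle=1$ and $\langle p_j,u\rangle=0$ for all $j\ne r$, $1\le j\le k$.
   Context: $N$ lattice, $M$ dual, $\langle\cdot,\cdot\rangle$ pairing, $\sigma^\vee$ the dual cone. Regular face: primitive ray generators extend to a basis of $N$. Demazure root for a ray generator $p_i$ of $\sigma$: $e\in M$ with $\langle p_i,e\rangle=-1$ and $\langle p_j,e\rangle\ge0$ for all other ray generators of $\sigma$. Compatibility with $\tau$: $\langle p_s,e_1^{(r)}\rangle=\langle p_s,e_2^{(r)}\rangle=-\delta_{rs}$ for $r,s=1,\ldots,k$. *)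

(* Defs.v *)
(* N = Z^n (row vectors 'rV[int]_n), M = Z^n (dual, same
   representation), N_Q = M_Q = 'rV[rat]_n, pairing = standard dot product. *)
From HB Require Import structures.
From mathcomp Require Import all_boot all_order all_algebra.
Set Implicit Arguments. Unset Strict Implicit. Unset Printing Implicit Defensive.
Import Order.TTheory GRing.Theory Num.Theory.
Local Open Scope ring_scope.

Section Toric.
Variable n : nat.

Definition pairQ (x m : 'rV[rat]_n) : rat := \sum_(i < n) x 0 i * m 0 i.
Definition pairZ (v e : 'rV[int]_n) : int := \sum_(i < n) v 0 i * e 0 i.
Definition toQ (v : 'rV[int]_n) : 'rV[rat]_n := map_mx (fun z : int => z%:~R) v.

Definition in_cone (S : seq 'rV[int]_n) (x : 'rV[rat]_n) : Prop :=
  exists lam : 'I_(size S) -> rat,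
    (forall i, 0 <= lam i) /\ x = \sum_(i < size S) lam i *: toQ (nth 0 S i).

Definition strongly_convex (S : seq 'rV[int]_n) : Prop :=
  forall x, in_cone S x -> in_cone S (- x) -> x = 0.

Definition is_face_of (C F : 'rV[rat]_n -> Prop) : Prop :=
  exists m : 'rV[rat]_n,
    (forall x, C x -> 0 <= pairQ x m) /\
    (forall x, F x <-> (C x /\ pairQ x m = 0)).

Definition primitive (v : 'rV[int]_n) : Prop :=
  v != 0 /\ forall (d : int) (w : 'rV[int]_n), v = d *: w -> `|d| = 1.

Definition ray (p : 'rV[int]_n) (x : 'rV[rat]_n) : Prop :=
  exists t : rat, 0 <= t /\ x = t *: toQ p.

Definition ray_gen (C : 'rV[rat]_n -> Prop) (p : 'rV[int]_n) : Prop :=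
  primitive p /\ is_face_of C (ray p).

Definition demazure_root (S : seq 'rV[int]_n) (p e : 'rV[int]_n) : Prop :=
  ray_gen (in_cone S) p /\ pairZ p e = -1 /\
  (forall q, ray_gen (in_cone S) q -> q <> p -> 0 <= pairZ q e).

Definition extends_to_basis (k : nat) (p : 'I_k -> 'rV[int]_n) : Prop :=
  exists B : 'M[int]_n, B \in unitmx /\
    exists f : 'I_k -> 'I_n, injective f /\ forall i, row (f i) B = p i.

Definition in_perp (g : 'rV[rat]_n -> Prop) (m : 'rV[int]_n) : Prop :=
  forall x, g x -> pairQ x (toQ m) = 0.

Definition in_dual (S : seq 'rV[int]_n) (m : 'rV[int]_n) : Prop :=
  forall x, in_cone S x -> 0 <= pairQ x (toQ m).

End Toric.

(* Main.v *)
Require Import Defs.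
From HB Require Import structures.
From mathcomp Require Import all_boot all_order all_algebra.
From mathcomp Require Import ring lra zify.
From Stdlib Require Import Classical.
Set Implicit Arguments. Unset Strict Implicit. Unset Printing Implicit Defensive.
Import Order.TTheory GRing.Theory Num.Theory.
Local Open Scope ring_scope.


Lemma pairQC n (x y : 'rV[rat]_n) : pairQ x y = pairQ y x.
Proof. by rewrite /pairQ; apply: eq_bigr => i _; rewrite mulrC. Qed.

Lemma pairQDl n (x y m : 'rV[rat]_n) : pairQ (x + y) m = pairQ x m + pairQ y m.
Proof. by rewrite /pairQ -big_split; apply: eq_bigr => i _; rewrite mxE mulrDl. Qed.

Lemma pairQZl n c (x m : 'rV[rat]_n) : pairQ (c *: x) m = c * pairQ x m.
Proof. by rewrite /pairQ mulr_sumr; apply: eq_bigr => i _; rewrite mxE mulrA. Qed.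

Lemma pairQ0l n (m : 'rV[rat]_n) : pairQ 0 m = 0.
Proof. by rewrite /pairQ big1 // => i _; rewrite mxE mul0r. Qed.

Lemma pairQNl n (x m : 'rV[rat]_n) : pairQ (- x) m = - pairQ x m.
Proof. by rewrite -scaleN1r pairQZl mulN1r. Qed.

Lemma pairQBl n (x y m : 'rV[rat]_n) : pairQ (x - y) m = pairQ x m - pairQ y m.
Proof. by rewrite pairQDl pairQNl. Qed.

Lemma pairQ_suml n (I : Type) (r : seq I) (P : pred I) (F : I -> 'rV[rat]_n) m :
  pairQ (\sum_(i <- r | P i) F i) m = \sum_(i <- r | P i) pairQ (F i) m.
Proof.
apply: (big_morph (fun x => pairQ x m)); first by move=> x y; rewrite pairQDl.
exact: pairQ0l.
Qed.

Lemma pairQDr n (x y m : 'rV[rat]_n) : pairQ m (x + y) = pairQ m x + pairQ m y.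
Proof. by rewrite !(pairQC m) pairQDl. Qed.
Lemma pairQZr n c (x m : 'rV[rat]_n) : pairQ m (c *: x) = c * pairQ m x.
Proof. by rewrite !(pairQC m) pairQZl. Qed.
Lemma pairQNr n (x m : 'rV[rat]_n) : pairQ m (- x) = - pairQ m x.
Proof. by rewrite !(pairQC m) pairQNl. Qed.
Lemma pairQBr n (x y m : 'rV[rat]_n) : pairQ m (x - y) = pairQ m x - pairQ m y.
Proof. by rewrite !(pairQC m) pairQBl. Qed.
Lemma pairQ_sumr n (I : Type) (r : seq I) (P : pred I) (F : I -> 'rV[rat]_n) m :
  pairQ m (\sum_(i <- r | P i) F i) = \sum_(i <- r | P i) pairQ m (F i).
Proof. rewrite pairQC pairQ_suml; apply: eq_bigr => i _; exact: pairQC. Qed.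

Definition ev n (j0 : 'I_n) : 'rV[rat]_n := \row_j (j == j0)%:R.

Lemma pairQ_ev n (x : 'rV[rat]_n) j0 : pairQ x (ev j0) = x 0 j0.
Proof.
rewrite /pairQ (bigD1 j0) //= big1 ?addr0; first by rewrite mxE eqxx mulr1.
by move=> i /negbTE hi; rewrite mxE hi mulr0.
Qed.

Lemma below_all (us : seq rat) : exists t, forall u, u \in us -> t < u.
Proof.
elim: us => [|u us [t Ht]]; first by exists 0.
case: (ltrP t u) => h.
  by exists t => v; rewrite inE => /orP [/eqP->|]; [|exact: Ht].
exists (u - 1) => v; rewrite inE => /orP [/eqP->|/Ht]; lra.
Qed.

Lemma between1 (l : rat) (us : seq rat) : (forall u, u \in us -> l < u) ->
  exists t, l < t /\ forall u, u \in us -> t < u.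
Proof.
elim: us => [|u us IH] H; first by exists (l + 1); split => //; lra.
have [t [lt Ht]] : exists t, l < t /\ forall u, u \in us -> t < u.
  by apply: IH => v hv; apply: H; rewrite inE hv orbT.
have lu : l < u by apply: H; rewrite inE eqxx.
case: (ltrP t u) => h.
  by exists t; split => // v; rewrite inE => /orP [/eqP->|]; [|exact: Ht].
exists ((l + u) / 2); split; first lra.
move=> v; rewrite inE => /orP [/eqP->|/Ht]; lra.
Qed.

Lemma between (ls us : seq rat) : (forall l u, l \in ls -> u \in us -> l < u) ->
  exists t, (forall l, l \in ls -> l < t) /\ forall u, u \in us -> t < u.
Proof.
elim: ls => [|l ls IH] H.
  by have [t Ht] := below_all us; exists t; split.
have [t [H1 H2]] : exists t, (forall l, l \in ls -> l < t) /\ forall u, u \in us -> t < u.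
  by apply: IH => a b ha hb; apply: H => //; rewrite inE ha orbT.
case: (ltrP l t) => h.
  by exists t; split => // a; rewrite inE => /orP [/eqP->|]; [|exact: H1].
have [t' [lt' Ht']] := between1 (fun u hu => H l u (mem_head _ _) hu).
exists t'; split => // a; rewrite inE => /orP [/eqP->|/H1] //; lra.
Qed.

Lemma between_fin (I : finType) (P Q : pred I) (L U : I -> rat) :
  (forall p q, P p -> Q q -> L p < U q) ->
  exists t, (forall p, P p -> L p < t) /\ forall q, Q q -> t < U q.
Proof.
move=> H.
have [t [H1 H2]] : exists t, (forall l, l \in [seq L p | p <- enum P] -> l < t) /\
   forall u, u \in [seq U q | q <- enum Q] -> t < u.
  apply: between => l u /mapP [p hp ->] /mapP [q hq ->].
  by move: hp hq; rewrite !mem_enum; apply: H.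
exists t; split.
  by move=> p hp; apply: H1; apply: map_f; rewrite mem_enum.
by move=> q hq; apply: H2; apply: map_f; rewrite mem_enum.
Qed.


Definition gordan_concl n (I : finType) (B : {set I}) (a : I -> 'rV[rat]_n) :=
 (exists y, forall i, i \in B -> 0 < pairQ (a i) y) \/
 (exists lam : I -> rat, (forall i, 0 <= lam i) /\ (exists2 i, i \in B & 0 < lam i) /\
    \sum_(i in B) lam i *: a i = 0).

Lemma sum_ge_term (I : finType) (F : I -> rat) i0 :
  (forall i, 0 <= F i) -> F i0 <= \sum_i F i.
Proof.
move=> H; rewrite (bigD1 i0) //= -{1}[F i0]addr0 lerD2l.
by apply: sumr_ge0 => i _.
Qed.

Lemma gordan_m n m : forall (I : finType) (B : {set I}) (a : I -> 'rV[rat]_n),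
  (forall i (j : 'I_n), i \in B -> (m <= j)%N -> a i 0 j = 0) -> gordan_concl B a.
Proof.
elim: m => [|m IH] I B a H.
  have a0 : forall i, i \in B -> a i = 0.
    by move=> i hi; apply/rowP => j; rewrite mxE; apply: H.
  have [->|[i0 hi0]] := set_0Vmem B.
    by left; exists 0 => i; rewrite in_set0.
  right; exists (fun i => (i == i0)%:R); split; first by move=> i; case: (i == i0).
  split; first by exists i0; rewrite ?eqxx ?ltr01.
  by apply: big1 => i hi; rewrite a0 // scaler0.
case: (ltnP m n) => hmn; last first.
  apply: IH => i j _ hj; have := ltn_ord j; lia.
pose j0 := Ordinal hmn.
pose al i := a i 0 j0.
pose B' : {set (I + (I * I))%type} := [set x | match x with
   | inl z => (z \in B) && (al z == 0)
   | inr pq => [&& pq.1 \in B, pq.2 \in B, 0 < al pq.1 & al pq.2 < 0] end].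
pose a' (x : (I + (I * I))%type) := match x with
   | inl z => a z
   | inr pq => (- al pq.2) *: a pq.1 + (al pq.1) *: a pq.2 end.
have H' : forall x (j : 'I_n), x \in B' -> (m <= j)%N -> a' x 0 j = 0.
  move=> x j hx hj.
  case: (eqVneq j j0) => [->|hne].
    move: hx; rewrite inE; case: x => [z /andP [_ /eqP]|[p q] /and4P [_ _ _ _]] //=.
    by rewrite !mxE /al; ring.
  have hj' : (m.+1 <= j)%N.
    rewrite ltn_neqAle hj andbT; apply/eqP => e; move: hne.
    by rewrite -val_eqE /= -e eqxx.
  move: hx; rewrite inE; case: x => [z /andP [hz _]|[p q] /and4P [hp hq _ _]] /=.
    exact: H.
  by rewrite !mxE !H // !mulr0 addr0.
have := IH _ B' a' H'; rewrite /gordan_concl => -[[y' Hy']|[lam' [lpos [[x0 hx0 lx0] lsum]]]].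
-
  left.
  pose L p := - pairQ (a p) y' / al p.
  pose U q := pairQ (a q) y' / (- al q).
  have hLU : forall p q, (p \in B) && (0 < al p) -> (q \in B) && (al q < 0) -> L p < U q.
    move=> p q /andP [hp ap] /andP [hq aq].
    have hx : inr (p, q) \in B' by rewrite inE /= hp hq ap aq.
    have := Hy' _ hx; rewrite /= pairQDl !pairQZl => pos.
    have key : U q - L p = (- al q * pairQ (a p) y' + al p * pairQ (a q) y') / (al p * - al q).
      rewrite /U /L; field.
      by rewrite (lt0r_neq0 ap) (ltr0_neq0 aq).
    have : 0 < U q - L p by rewrite key divr_gt0 // mulr_gt0 // oppr_gt0.
    lra.
  have [t [Ht1 Ht2]] := between_fin hLU.
  exists (y' + t *: ev j0) => i hi.
  rewrite pairQDr pairQZr pairQ_ev -/(al i).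
  case: (ltrgtP (al i) 0) => ai.
  + have := Ht2 i; rewrite hi ai => /(_ isT); rewrite /U ltr_pdivlMr ?oppr_gt0 //.
    move=> h; nra.
  + have := Ht1 i; rewrite hi ai => /(_ isT); rewrite /L ltr_pdivrMr //.
    move=> h; nra.
  + have hx : inl i \in B' by rewrite inE /= hi ai eqxx.
    by have := Hy' _ hx; rewrite /= ai mulr0 addr0.
-
  right.
  pose c x := if x \in B' then lam' x else 0.
  have cpos : forall x, 0 <= c x by move=> x; rewrite /c; case: ifP.
  have cB : forall x, c x != 0 -> x \in B'.
    by move=> x; rewrite /c; case: ifP => // _; rewrite eqxx.
  pose mu i := c (inl i) + \sum_q c (inr (i, q)) * (- al q) + \sum_p c (inr (p, i)) * al p.
  have t1pos : forall i q, 0 <= c (inr (i, q)) * (- al q).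
    move=> i q; case: (eqVneq (c (inr (i, q))) 0) => [->|/cB]; first by rewrite mul0r.
    rewrite inE => /and4P [_ _ _ aq]; apply: mulr_ge0 => //; lra.
  have t2pos : forall i p, 0 <= c (inr (p, i)) * al p.
    move=> i p; case: (eqVneq (c (inr (p, i))) 0) => [->|/cB]; first by rewrite mul0r.
    rewrite inE => /and4P [_ _ ap _]; apply: mulr_ge0 => //; lra.
  have mupos : forall i, 0 <= mu i.
    move=> i; rewrite /mu; apply: addr_ge0; first apply: addr_ge0 => //.
      by apply: sumr_ge0 => q _.
    by apply: sumr_ge0 => p _.
  have muB : forall i, i \notin B -> mu i = 0.
    move=> i hi.
    have e1 : c (inl i) = 0.
      by case: (eqVneq (c (inl i)) 0) => // /cB; rewrite inE /= (negbTE hi).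
    rewrite /mu e1 add0r !big1 ?addr0 // => q _.
      have -> : c (inr (q, i)) = 0.
        by case: (eqVneq (c (inr (q, i))) 0) => // /cB; rewrite inE /= (negbTE hi) andbF.
      by rewrite mul0r.
    have -> : c (inr (i, q)) = 0.
      by case: (eqVneq (c (inr (i, q))) 0) => // /cB; rewrite inE /= (negbTE hi).
    by rewrite mul0r.
  exists mu; split => //; split.
    move: hx0 lx0; case: x0 => [z|[p q]] hx hl.
    + have hz : z \in B by move: hx; rewrite inE => /andP [].
      exists z => //; rewrite /mu.
      have : 0 < c (inl z) by rewrite /c hx.
      have := mupos z; rewrite /mu.
      have : 0 <= \sum_q c (inr (z, q)) * - al q by apply: sumr_ge0.
      have : 0 <= \sum_p c (inr (p, z)) * al p by apply: sumr_ge0.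
      lra.
    + move: (hx); rewrite inE => /and4P [hp hq ap aq].
      exists p => //.
      have h1 : 0 < c (inr (p, q)) * - al q by rewrite /c hx mulr_gt0 // oppr_gt0.
      have h2 := sum_ge_term q (t1pos p).
      have : 0 <= c (inl p) := cpos _.
      have : 0 <= \sum_p0 c (inr (p0, p)) * al p0 by apply: sumr_ge0.
      rewrite /mu; lra.
  have e1 : \sum_(i in B) mu i *: a i = \sum_i mu i *: a i.
    rewrite [RHS](bigID (fun i => i \in B)) /= [X in _ = _ + X]big1 ?addr0 //.
    by move=> i hi; rewrite muB // scale0r.
  have e2 : \sum_x c x *: a' x = 0.
    rewrite -[RHS]lsum [RHS]big_mkcond; apply: eq_bigr => x _.
    by rewrite /c; case: ifP => _; rewrite ?scale0r.
  rewrite e1 -[RHS]e2 big_sumType /=.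
  rewrite /mu.
  under eq_bigr => i _ do rewrite !scalerDl.
  have E : forall x : I * I, c (inr x) *: (- al x.2 *: a x.1 + al x.1 *: a x.2) =
     c (inr x) *: (- al x.2 *: a x.1) + c (inr x) *: (al x.1 *: a x.2).
    by move=> x; rewrite scalerDr.
  rewrite big_split big_split /= -addrA; congr (_ + _).
  rewrite (eq_bigr _ (fun x _ => E x)) big_split /=; congr (_ + _).
    under eq_bigr => i _ do rewrite scaler_suml.
    rewrite pair_bigA /=; apply: eq_bigr => -[p q] _ /=.
    by rewrite scalerA.
  under eq_bigr => i _ do rewrite scaler_suml.
  rewrite exchange_big pair_bigA /=; apply: eq_bigr => -[p q] _ /=.
  by rewrite scalerA.
Qed.

Lemma gordan n (I : finType) (B : {set I}) (a : I -> 'rV[rat]_n) : gordan_concl B a.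
Proof. apply: (@gordan_m n n) => i j _ hj; have := ltn_ord j; lia. Qed.


Definition vv n (S : seq 'rV[int]_n) (i : 'I_(size S)) : 'rV[rat]_n := toQ (nth 0 S i).

Definition coneA n (S : seq 'rV[int]_n) (A : {set 'I_(size S)}) (x : 'rV[rat]_n) :=
  exists lam : 'I_(size S) -> rat, (forall i, 0 <= lam i) /\ x = \sum_(i in A) lam i *: vv i.
Arguments coneA {n} S A x.

Lemma in_cone_setT n (S : seq 'rV[int]_n) x : in_cone S x <-> coneA S setT x.
Proof.
split => -[lam [l0 ->]]; exists lam; split => //.
  by apply: eq_bigl => i; rewrite in_setT.
by apply: esym; apply: eq_bigl => i; rewrite in_setT.
Qed.

Lemma cone_pred n (S : seq 'rV[int]_n) (A : {set 'I_(size S)}) (P : pred 'I_(size S))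
  (lam : 'I_(size S) -> rat) :
  (forall j, P j -> j \in A) -> (forall j, P j -> 0 <= lam j) ->
  coneA S A (\sum_(j | P j) lam j *: vv j).
Proof.
move=> PA l0; exists (fun j => if P j then lam j else 0); split.
  by move=> j; case: ifP => // /l0.
rewrite big_mkcond [RHS]big_mkcond; apply: eq_bigr => j _.
case: ifP => Pj; first by rewrite (PA _ Pj).
by case: ifP => _; rewrite ?scale0r.
Qed.

Lemma cone0 n (S : seq 'rV[int]_n) (A : {set 'I_(size S)}) : coneA S A 0.
Proof. by exists (fun=> 0); split => // ; rewrite big1 // => i _; rewrite scale0r. Qed.

Lemma cone_vec n (S : seq 'rV[int]_n) (A : {set 'I_(size S)}) i (t : rat) : i \in A -> 0 <= t -> coneA S A (t *: vv i).
Proof.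
move=> hi t0; have := @cone_pred n S A (pred1 i) (fun=> t) _ _.
rewrite big_pred1_eq; apply => // j /eqP -> //.
Qed.

Lemma cone_add n (S : seq 'rV[int]_n) (A : {set 'I_(size S)}) x y : coneA S A x -> coneA S A y -> coneA S A (x + y).
Proof.
move=> [l [l0 ->]] [m [m0 ->]]; exists (fun j => l j + m j); split.
  by move=> j; apply: addr_ge0.
by rewrite -big_split; apply: eq_bigr => j _; rewrite scalerDl.
Qed.

Lemma cone_sub n (S : seq 'rV[int]_n) (A B : {set 'I_(size S)}) x :
  B \subset A -> coneA S B x -> coneA S A x.
Proof.
move=> /subsetP BA [l [l0 ->]]; exact: cone_pred.
Qed.

Lemma sumD1 (R : zmodType) (I : finType) (A : {set I}) i (F : I -> R) :
  i \in A -> \sum_(j in A) F j = F i + \sum_(j in A :\ i) F j.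
Proof.
move=> hi; rewrite (bigD1 i hi) /=; congr (_ + _).
by apply: eq_bigl => j; rewrite in_setD1 andbC.
Qed.

Lemma cone_remove n (S : seq 'rV[int]_n) (A : {set 'I_(size S)}) i x :
  i \in A -> coneA S (A :\ i) (vv i) -> coneA S A x -> coneA S (A :\ i) x.
Proof.
move=> hi [mu [mu0 emu]] [l [l0 ->]].
rewrite (sumD1 _ hi) emu scaler_sumr -big_split /=.
exists (fun j => l i * mu j + l j); split.
  by move=> j; apply: addr_ge0 => //; apply: mulr_ge0.
by apply: eq_bigr => j _; rewrite scalerDl scalerA.
Qed.


Lemma toQE n (v : 'rV[int]_n) j : toQ v 0 j = (v 0 j)%:~R.
Proof. by rewrite mxE. Qed.

Lemma toQ0 n : toQ (0 : 'rV[int]_n) = 0.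
Proof. by apply/rowP => j; rewrite !mxE. Qed.

Lemma toQ_eq0 n (v : 'rV[int]_n) : toQ v = 0 -> v = 0.
Proof.
move=> h; apply/rowP => j; have := congr1 (fun M : 'rV[rat]_n => M 0 j) h.
by rewrite !mxE => /eqP; rewrite intr_eq0 => /eqP.
Qed.

Lemma toQZ n c (v : 'rV[int]_n) : toQ (c *: v) = c%:~R *: toQ v.
Proof. by apply/rowP => j; rewrite !mxE intrM. Qed.

Lemma toQD n (v w : 'rV[int]_n) : toQ (v + w) = toQ v + toQ w.
Proof. by apply/rowP => j; rewrite !mxE intrD. Qed.

Lemma toQ_sum n (I : Type) (r : seq I) (P : pred I) (F : I -> 'rV[int]_n) :
  toQ (\sum_(i <- r | P i) F i) = \sum_(i <- r | P i) toQ (F i).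
Proof. apply: (big_morph (@toQ n)); [exact: toQD | exact: toQ0]. Qed.

Lemma pairQ_toQ n (a b : 'rV[int]_n) : pairQ (toQ a) (toQ b) = (pairZ a b)%:~R.
Proof.
rewrite /pairQ /pairZ rmorph_sum; apply: eq_bigr => i _.
by rewrite !mxE /= intrM.
Qed.

Lemma pairZDr n (x y m : 'rV[int]_n) : pairZ m (x + y) = pairZ m x + pairZ m y.
Proof. by rewrite /pairZ -big_split; apply: eq_bigr => i _; rewrite mxE mulrDr. Qed.
Lemma pairZZr n c (x m : 'rV[int]_n) : pairZ m (c *: x) = c * pairZ m x.
Proof. by rewrite /pairZ mulr_sumr; apply: eq_bigr => i _; rewrite mxE mulrCA. Qed.
Lemma pairZ0r n (m : 'rV[int]_n) : pairZ m 0 = 0.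
Proof. by rewrite /pairZ big1 // => i _; rewrite mxE mulr0. Qed.
Lemma pairZ_sumr n (I : Type) (r : seq I) (P : pred I) (F : I -> 'rV[int]_n) m :
  pairZ m (\sum_(i <- r | P i) F i) = \sum_(i <- r | P i) pairZ m (F i).
Proof.
apply: (big_morph (fun x => pairZ m x)); first by move=> x y; rewrite pairZDr.
exact: pairZ0r.
Qed.

Lemma prim_decomp n (s : 'rV[int]_n) : s != 0 ->
  exists c : int, 0 < c /\ exists q, primitive q /\ s = c *: q.
Proof.
move=> s0.
have [j0 hj0] : exists j0, s 0 j0 != 0.
  case: (pickP (fun j => s 0 j != 0)) => [j hj|none]; first by exists j.
  move: s0; suff -> : s = 0 by rewrite eqxx.
  apply/rowP => j; rewrite mxE; apply/eqP; exact: negbFE (none j).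
pose P c := (0 < c)%N && [forall j, s 0 j \in dvdz c%:Z].
have exP : exists c, P c.
  by exists 1%N; rewrite /P /=; apply/forallP => j; rewrite dvd1z.
pose z := s 0 j0.
have ubP : forall c, P c -> (c <= `|z|)%N.
  move=> c /andP [_ /forallP /(_ j0)]; rewrite /dvdz /= => h.
  by apply: dvdn_leq => //; rewrite absz_gt0.
case: (ex_maxnP exP ubP) => c /andP [c0 /forallP hc] cmax.
pose q := \row_j divz (s 0 j) c%:Z.
have sq : s = c%:Z *: q.
  by apply/rowP => j; rewrite !mxE mulrC divzK //; exact: hc.
exists c%:Z; split; first by rewrite ltz_nat.
exists q; split => //; split.
  by apply/eqP => q0; move: s0; rewrite sq q0 scaler0 eqxx.
move=> d w qw.
have d0 : d != 0.
  by apply/eqP => d0; move: s0; rewrite sq qw d0 scale0r scaler0 eqxx.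
have : P (c * `|d|)%N.
  rewrite /P muln_gt0 c0 absz_gt0 d0 /=; apply/forallP => j.
  rewrite sq qw !mxE /dvdz -topredE /= !abszM.
  by rewrite mulnA dvdn_mulr.
move=> /cmax h.
have : (`|d| <= 1)%N.
  by rewrite -(leq_pmul2l c0) muln1.
have : (0 < `|d|)%N by rewrite absz_gt0.
move=> h1 h2; have e : `|d|%N = 1%N by lia.
by rewrite -abszE e.
Qed.


Lemma irr_nz n (S : seq 'rV[int]_n) (A : {set 'I_(size S)}) j :
  (forall j, j \in A -> ~ coneA S (A :\ j) (vv j)) -> j \in A -> vv j != 0.
Proof. by move=> irr hj; apply/eqP => e; apply: (irr j hj); rewrite e; apply: cone0. Qed.

Lemma face_exposed n (S : seq 'rV[int]_n) (A : {set 'I_(size S)}) i :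
  strongly_convex S -> (forall x, coneA S A x <-> in_cone S x) ->
  (forall j, j \in A -> ~ coneA S (A :\ j) (vv j)) -> i \in A ->
  is_face_of (in_cone S) (ray (nth 0 S i)).
Proof.
move=> sc eqA irr hi.
have vnz := irr_nz irr.
have [j0 hj0] : exists j0, vv i 0 j0 != 0.
  case: (pickP (fun j => vv i 0 j != 0)) => [j hj|none]; first by exists j.
  have := vnz i hi; suff -> : vv i = 0 by rewrite eqxx.
  apply/rowP => j; rewrite [RHS]mxE; apply/eqP; exact: negbFE (none j).
pose beta := vv i 0 j0.
pose a (j : 'I_(size S)) := vv j - (vv j 0 j0 / beta) *: vv i.
have [[y Hy]|[lam [l0 [[j1 hj1 lj1] lsum]]]] := gordan (A :\ i) a.
- pose m := y - (pairQ (vv i) y / beta) *: ev j0.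
  have mj : forall j, pairQ (vv j) m = pairQ (a j) y.
    move=> j; rewrite /m /a pairQBr pairQZr pairQ_ev pairQBl pairQZl; ring.
  have mi : pairQ (vv i) m = 0.
    by rewrite pairQBr pairQZr pairQ_ev -/beta divfK ?subrr.
  have mpos : forall j, j \in A -> j != i -> 0 < pairQ (vv j) m.
    by move=> j hj hji; rewrite mj; apply: Hy; rewrite in_setD1 hji hj.
  have mge : forall j, j \in A -> 0 <= pairQ (vv j) m.
    move=> j hj; case: (eqVneq j i) => [->|hji]; first by rewrite mi.
    exact: ltW (mpos j hj hji).
  exists m; split.
    move=> x /eqA [lam [l0 ->]]; rewrite pairQ_suml; apply: sumr_ge0 => j hj.
    by rewrite pairQZl; apply: mulr_ge0 => //; exact: mge.
  move=> x; split.
    move=> [t [t0 ->]]; split; first by apply/eqA; exact: (cone_vec hi t0).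
    by rewrite pairQZl mi mulr0.
  move=> [/eqA [lam [l0 ex]] hx]; exists (lam i); split => //.
  rewrite ex (sumD1 _ hi) [X in _ + X]big1 ?addr0 //.
  move: hx; rewrite ex pairQ_suml (sumD1 _ hi) pairQZl mi mulr0 add0r => hx.
  move=> j hj.
  have hjA : j \in A by move: hj; rewrite in_setD1 => /andP [].
  have hji : j != i by move: hj; rewrite in_setD1 => /andP [].
  have : lam j * pairQ (vv j) m = 0.
    rewrite -pairQZl; apply: (psumr_eq0P _ hx) => // k hk.
    rewrite pairQZl; apply: mulr_ge0 => //; apply: mge.
    by move: hk; rewrite in_setD1 => /andP [].
  move=> /eqP; rewrite mulf_eq0 => /orP [/eqP ->|/eqP h]; first by rewrite scale0r.
  by have := mpos j hjA hji; rewrite h ltxx.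
- exfalso.
  have hsum : \sum_(j in A :\ i) lam j *: vv j =
      (\sum_(j in A :\ i) lam j * (vv j 0 j0 / beta)) *: vv i.
    move: lsum; rewrite /a.
    under eq_bigr => j _ do rewrite scalerBr scalerA.
    by rewrite sumrB scaler_suml => /eqP; rewrite subr_eq0 => /eqP.
  move: hsum; set c := \sum_(j in A :\ i) lam j * (vv j 0 j0 / beta) => hsum.
  have hj1A : j1 \in A by move: hj1; rewrite in_setD1 => /andP [].
  case: (ltrP 0 c) => c0.
    apply: (irr i hi); exists (fun j => lam j / c); split.
      by move=> j; rewrite divr_ge0 // ltW.
    have -> : vv i = c^-1 *: \sum_(j in A :\ i) lam j *: vv j.
      by rewrite hsum scalerA mulVf ?scale1r // lt0r_neq0.
    by rewrite scaler_sumr; apply: eq_bigr => j _; rewrite scalerA mulrC.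
  pose x := lam j1 *: vv j1.
  have Cx : in_cone S x by apply/eqA; apply: cone_vec => //; exact: ltW.
  have Cnx : in_cone S (- x).
    apply/eqA.
    move: hsum; rewrite (bigD1 j1 hj1) /= -/x => hsum.
    have -> : - x = (- c) *: vv i + \sum_(j in A :\ i | j != j1) lam j *: vv j.
      have -> : \sum_(j in A :\ i | j != j1) lam j *: vv j = c *: vv i - x.
        by rewrite -hsum addrAC subrr add0r.
      by rewrite scaleNr addrA addNr add0r.
    apply: cone_add; first by apply: cone_vec => //; rewrite oppr_ge0.
    apply: cone_pred => // j /andP [hj _].
    by move: hj; rewrite in_setD1 => /andP [].
  have := sc _ Cx Cnx => /eqP; rewrite scaler_eq0 => /orP [/eqP h|/eqP h].
    by move: lj1; rewrite h ltxx.
  by move: (vnz j1 hj1A); rewrite h eqxx.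
Qed.

Lemma irr_raygen n (S : seq 'rV[int]_n) (A : {set 'I_(size S)}) i :
  strongly_convex S -> (forall x, coneA S A x <-> in_cone S x) ->
  (forall j, j \in A -> ~ coneA S (A :\ j) (vv j)) -> i \in A ->
  exists q, ray_gen (in_cone S) q /\ exists c : rat, 0 < c /\ vv i = c *: toQ q.
Proof.
move=> sc eqA irr hi.
have [m [m1 m2]] := face_exposed sc eqA irr hi.
have snz : nth 0 S i != 0.
  by apply/eqP => e; have := irr_nz irr hi; rewrite /vv e toQ0 eqxx.
have [c [c0 [q [pq sq]]]] := prim_decomp snz.
have cQ : 0 < (c%:~R : rat) by rewrite ltr0z.
have vq : vv i = c%:~R *: toQ q by rewrite /vv sq toQZ.
exists q; split; last by exists c%:~R.
split => //; exists m; split => // x; rewrite -m2; split.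
  move=> [t [t0 ->]]; exists (t / c%:~R); split; first by rewrite divr_ge0 // ltW.
  by rewrite -/(vv i) vq scalerA divfK // lt0r_neq0.
move=> [t [t0 ->]]; exists (t * c%:~R); split; first by rewrite mulr_ge0 // ltW.
by rewrite -scalerA -vq.
Qed.

Lemma mink n (S : seq 'rV[int]_n) w : strongly_convex S ->
  (forall q, ray_gen (in_cone S) q -> 0 <= pairQ (toQ q) w) ->
  forall x, in_cone S x -> 0 <= pairQ x w.
Proof.
move=> sc Hw.
suff H : forall k (A : {set 'I_(size S)}), (#|A| < k)%N ->
    (forall x, coneA S A x <-> in_cone S x) -> forall x, in_cone S x -> 0 <= pairQ x w.
  apply: (H (#|[set: 'I_(size S)]|.+1) setT) => // x.
  by split => /in_cone_setT.
elim=> [//|k IH] A hA eqA x Cx.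
case: (classic (exists i, i \in A /\ coneA S (A :\ i) (vv i))) => [[i [hi hv]]|nex].
  apply: (IH (A :\ i)) => //.
    by move: hA; rewrite (cardsD1 i A) hi add1n ltnS.
  move=> y; split.
    by move=> hy; apply/eqA; apply: cone_sub hy; exact: subD1set.
  by move=> /eqA hy; exact: cone_remove.
have irr : forall j, j \in A -> ~ coneA S (A :\ j) (vv j).
  by move=> j hj hc; apply: nex; exists j.
move/eqA: Cx => [lam [l0 ->]]; rewrite pairQ_suml; apply: sumr_ge0 => j hj.
rewrite pairQZl; apply: mulr_ge0 => //.
have [q [rq [c [c0 ->]]]] := irr_raygen sc eqA irr hj.
by rewrite pairQZl; apply: mulr_ge0; [exact: ltW | exact: Hw].
Qed.


Lemma integral_multiple n (mg : 'rV[rat]_n) :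
  exists D : int, 0 < D /\ exists M : 'rV[int]_n, toQ M = D%:~R *: mg.
Proof.
exists (\prod_(i < n) denq (mg 0 i)); split.
  by apply: prodr_gt0 => i _; exact: denq_gt0.
exists (\row_i (numq (mg 0 i) * \prod_(j < n | j != i) denq (mg 0 j))).
apply/rowP => i; rewrite !mxE [in RHS](bigD1 i) //=.
have e : mg 0 i = (numq (mg 0 i))%:~R / (denq (mg 0 i))%:~R by rewrite divq_num_den.
rewrite [X in _ = _ * X]e !intrM.
have : (denq (mg 0 i))%:~R != (0 : rat) by rewrite intr_eq0 denq_neq0.
move=> h; field.
exact: h.
Qed.

Lemma ray_gen_in n (S : seq 'rV[int]_n) q : ray_gen (in_cone S) q -> in_cone S (toQ q).
Proof.
move=> [_ [m [_ h]]].
have hr : ray q (toQ q) by exists 1; rewrite scale1r ler01.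
by have [] := (h (toQ q)).1 hr.
Qed.

Unset Implicit Arguments.

Theorem mainTheorem11 (n k : nat) (S : seq 'rV[int]_n)
  (tau gamma : 'rV[rat]_n -> Prop) (p : 'I_k -> 'rV[int]_n)
  (e1 e2 : 'I_k -> 'rV[int]_n) :
  strongly_convex S ->
  is_face_of (in_cone S) tau ->
  (forall q, ray_gen tau q <-> exists i, q = p i) ->
  extends_to_basis p ->
  (forall r, demazure_root S (p r) (e1 r) /\ demazure_root S (p r) (e2 r)) ->
  (forall r s, pairZ (p s) (e1 r) = - (r == s)%:R /\
               pairZ (p s) (e2 r) = - (r == s)%:R) ->
  is_face_of (in_cone S) gamma ->
  (forall r, ~ gamma (toQ (p r)) -> in_perp gamma (e1 r) \/ in_perp gamma (e2 r)) ->
  forall r, ~ gamma (toQ (p r)) ->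
    exists u : 'rV[int]_n,
      in_perp gamma u /\ in_dual S u /\ pairZ (p r) u = 1 /\
      (forall j, j != r -> pairZ (p j) u = 0).
Proof.
move=> sc _ _ _ roots compat [mg [mg1 mg2]] hperp r hr.
have [D [D0 [M toQM]]] := integral_multiple mg.
have DQ : 0 < (D%:~R : rat) by rewrite ltr0z.
have pM : forall x, pairQ x (toQ M) = D%:~R * pairQ x mg.
  by move=> x; rewrite toQM pairQZr.
have Mperp : in_perp gamma M.
  by move=> x /mg2 [_ h]; rewrite pM h mulr0.
have Mdual : in_dual S M.
  by move=> x hx; rewrite pM; apply: mulr_ge0; [exact: ltW | exact: mg1].
have pC : forall j, in_cone S (toQ (p j)).
  by move=> j; apply: ray_gen_in; exact: (roots j).1.1.
pose pZ j := pairZ (p j) M.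
have pZg : forall j, gamma (toQ (p j)) -> pZ j = 0.
  move=> j /Mperp; rewrite pairQ_toQ => /eqP; rewrite intr_eq0 => /eqP //.
have pZn : forall j, ~ gamma (toQ (p j)) -> 1 <= pZ j.
  move=> j hj.
  have h1 : 0 <= pairQ (toQ (p j)) mg by apply: mg1.
  have h2 : pairQ (toQ (p j)) mg != 0.
    by apply/eqP => h; apply: hj; apply/mg2; split.
  have : 0 < pairQ (toQ (p j)) (toQ M) by rewrite pM mulr_gt0 // lt0r h2 h1.
  by rewrite pairQ_toQ ltr0z.
have [E hE] : exists E : 'I_k -> 'rV[int]_n, forall j,
    (E j = e1 j \/ E j = e2 j) /\ (~ gamma (toQ (p j)) -> in_perp gamma (E j)).
  apply: (@fin_all_exists _ (fun=> 'rV[int]_n) (fun j E => (E = e1 j \/ E = e2 j) /\ (~ gamma (toQ (p j)) -> in_perp gamma E))) => j.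
  case: (classic (gamma (toQ (p j)))) => hg.
    by exists (e1 j); split; [left | move=> /(_ hg)].
  case: (hperp j hg) => h.
    by exists (e1 j); split; [left | ].
  by exists (e2 j); split; [right | ].
have Eroot : forall j, demazure_root S (p j) (E j).
  by move=> j; case: (hE j) => [[]->] _; case: (roots j).
have Epair : forall j s, pairZ (p s) (E j) = - (j == s)%:R.
  by move=> j s; case: (hE j) => [[]->] _; case: (compat j s).
pose a j := pZ j - (j == r)%:R.
have agam : forall j, gamma (toQ (p j)) -> a j = 0.
  move=> j hg; rewrite /a pZg //.
  case: (eqVneq j r) => [e|]; last by rewrite subrr.
  by exfalso; apply: hr; rewrite -e.
have apos : forall j, 0 <= a j.
  move=> j; case: (classic (gamma (toQ (p j)))) => hg; first by rewrite agam.
  have := pZn j hg; rewrite /a; case: (j == r) => /=; lia.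
pose u := M + \sum_j a j *: E j.
have pu : forall q, pairZ q u = pairZ q M + \sum_j a j * pairZ q (E j).
  move=> q; rewrite /u pairZDr pairZ_sumr; congr (_ + _).
  by apply: eq_bigr => j _; rewrite pairZZr.
have pup : forall i, pairZ (p i) u = (i == r)%:R.
  move=> i; rewrite pu (bigD1 i) //= big1 ?addr0.
    by rewrite Epair eqxx /a -/(pZ i) mulrN1 opprB addrC subrK.
  by move=> j /negbTE hj; rewrite Epair hj oppr0 mulr0.
exists u; split.
  move=> x hx.
  rewrite /u toQD toQ_sum pairQDr Mperp // pairQ_sumr add0r big1 // => j _.
  rewrite toQZ pairQZr.
  case: (classic (gamma (toQ (p j)))) => hg; first by rewrite agam // mul0r.
  by rewrite (hE j).2 // mulr0.
split.
  apply: mink => // q rq.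
  rewrite pairQ_toQ ler0z.
  case: (pickP (fun j => q == p j)) => [j /eqP ->|none].
    by rewrite pup; case: (j == r).
  rewrite pu; apply: addr_ge0.
    by have := Mdual _ (ray_gen_in rq); rewrite pairQ_toQ ler0z.
  apply: sumr_ge0 => j _; apply: mulr_ge0 => //.
  have [_ [_ h]] := Eroot j; apply: h => // e; move: (none j); rewrite e eqxx.
  by [].
split; first by rewrite pup eqxx.
by move=> j /negbTE hj; rewrite pup hj.
Qed.
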